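(* Under the setting below, let $\lambda^\dagger=\inf\{\lambda\ge 0: A(\lambda)\le Q\}$ (with $\inf\emptyset=+\infty$) and $\lambda^*=\min(\pi,\lambda^\dagger)$. Then the primal point $(x_t^*,z_t^* )=W_t(\lambda^* )$ for all $t$, together with $s^*=\max\big(0,\sum_{t=1}^T\tilde h_t(x_t^*,z_t^* )-Q\big)$ and the shadow price $\lambda^*$ as multiplier of (C) (and suitable nonnegative multipliers for the other constraints), satisfies the KKT conditions of (P).
   Context: Fix an integer $T\ge 1$, a data cap $Q>0$ and an overage fee $\pi>0$. For each $t\in\{1,\dots,T\}$ fix reals $d_t\ge 0$, $r_t\ge 0$, $c_t>0$, $p_t>0$, $\theta_t>0$, $\beta_t>0$ and functions $u_t,e_t:[0,\infty)\to\mathbb{R}$ such that: $u_t$ is continuous, increasing and strictly concave, differentiable on $(0,\infty)$, and $u_t':(0,\infty)\to(0,\infty)$ is a strictly decreasing bijection with inverse $u_t'^{-1}$; $e_t$ is increasing, strictly convex and continuously differentiable, and $e_t':[0,\infty)\to[0,\infty)$ is a strictly increasing bijection with inverse $e_t'^{-1}$. For $0\le z\le x\le 1$ let $\tilde f_t(x,z)=\theta_t u_t(x)-\beta_t e_t((x-z)c_t)-p_t c_t z$ and $\tilde h_t(x,z)=d_t x+r_t z$. Problem (P): maximize $\sum_{t=1}^T \tilde f_t(x_t,z_t)-\pi s$ over $x,z\in\mathbb{R}^T$, $s\in\mathbb{R}$, subject to $0\le z_t\le x_t\le 1$ for all $t$, $s\ge 0$, and (C): $s\ge \sum_{t=1}^T\tilde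 h_t(x_t,z_t)-Q$. A KKT point of (P) consists of a feasible $(x^*,z^*,s^* )$ and nonnegative Lagrange multipliers for all constraints satisfying stationarity of the Lagrangian and complementary slackness; $\lambda^*$ denotes the multiplier of (C) (the shadow price of wireless data). For $\lambda\ge 0$ and $\beta>0$ write $a_t(\beta,\lambda)=\frac{1}{c_t}\,e_t'^{-1}\!\Big(\frac{p_tc_t+r_t\lambda}{\beta c_t}\Big)$ and $X_t(\lambda)=p_tc_t+(d_t+r_t)\lambda$. Define the sets (all with $\beta>0$): $\Omega^{I}_t(\lambda)=\{(\beta,\theta):\theta>\frac{\beta c_t e_t'(c_t)+d_t\lambda}{u_t'(1)},\ \beta<\frac{p_tc_t+r_t\lambda}{c_te_t'(c_t)}\}$; $\Omega^{II}_t(\lambda)=\{(\beta,\theta):\theta>\frac{X_t(\lambda)}{u_t'(1)},\ \beta\ge\frac{p_tc_t+r_t\lambda}{c_te_t'(c_t)}\}$; $\Omega^{III}_t(\lambda)=\{(\beta,\theta):\frac{X_t(\lambda)}{u_t'(a_t(\beta,\lambda))}\le\theta\le\frac{X_t(\lambda)}{u_t'(1)}\}$; $\Omega^{IV}_t(\lambda)=\{(\beta,\theta):\theta<\frac{X_t(\lambda)}{u_t'(a_t(\beta,\lambda))},\ \theta\le\frac{\beta c_te_t'(c_t)+d_t\lambda}{u_t'(1)}\}$. Let $z^{II}_t(\lambda)=1-a_t(\beta_t,\lambda)$, $x^{III}_t(\lambda)=u_t'^{-1}(X_t(\lambda)/\theta_t)$, $z^{III}_t(\lambda)=x^{III}_t(\lambda)-a_t(\beta_t,\lambda)$,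 and let $x^{IV}_t(\lambda)\in(0,1]$ be the solution of $\theta_tu_t'(x)-\beta_tc_te_t'(xc_t)=d_t\lambda$. Define $W_t(\lambda)=(1,0)$ if $(\beta_t,\theta_t)\in\Omega^I_t(\lambda)$; $(1,z^{II}_t(\lambda))$ if in $\Omega^{II}_t(\lambda)$; $(x^{III}_t(\lambda),z^{III}_t(\lambda))$ if in $\Omega^{III}_t(\lambda)$; $(x^{IV}_t(\lambda),0)$ if in $\Omega^{IV}_t(\lambda)$. Define the potential data usage $A(\lambda)=\sum_{t=1}^T\tilde h_t(W_t(\lambda))$. *)

(* Defs.v *)
From Stdlib Require Import Reals Lra ClassicalEpsilon.
From Coquelicot Require Import Coquelicot.
Open Scope R_scope.

Definition u_hyp (u du iu : R -> R) : Prop :=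
  (forall x, 0 <= x -> filterlim u (within (fun y => 0 <= y) (locally x)) (locally (u x))) /\
  (forall x y, 0 <= x -> x <= y -> u x <= u y) /\
  (forall x y l, 0 <= x -> 0 <= y -> x <> y -> 0 < l < 1 ->
      l * u x + (1 - l) * u y < u (l * x + (1 - l) * y)) /\
  (forall x, 0 < x -> is_derive u x (du x)) /\
  (forall x, 0 < x -> 0 < du x) /\
  (forall x y, 0 < x -> x < y -> du y < du x) /\
  (forall y, 0 < y -> exists x, 0 < x /\ du x = y) /\
  (forall y, 0 < y -> 0 < iu y /\ du (iu y) = y).

Definition e_hyp (e de ie : R -> R) : Prop :=
  (forall x y, 0 <= x -> x <= y -> e x <= e y) /\
  (forall x y l, 0 <= x -> 0 <= y -> x <> y -> 0 < l < 1 ->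
      e (l * x + (1 - l) * y) < l * e x + (1 - l) * e y) /\
  (forall x, 0 <= x ->
      filterlim (fun y => (e y - e x) / (y - x))
        (within (fun y => 0 <= y /\ y <> x) (locally x)) (locally (de x))) /\
  (forall x, 0 <= x -> filterlim de (within (fun y => 0 <= y) (locally x)) (locally (de x))) /\
  (forall x, 0 <= x -> 0 <= de x) /\
  (forall x y, 0 <= x -> x < y -> de x < de y) /\
  (forall y, 0 <= y -> exists x, 0 <= x /\ de x = y) /\
  (forall y, 0 <= y -> 0 <= ie y /\ de (ie y) = y).

Definition a_val (ie : R -> R) (c p r be lam : R) : R :=
  / c * ie ((p * c + r * lam) / (be * c)).

Definition X_val (c p d r lam : R) : R := p * c + (d + r) * lam.

Definition OmegaI (du de : R -> R) (c p d r lam be th : R) : Prop :=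
  0 < be /\ (be * c * de c + d * lam) / du 1 < th /\
  be < (p * c + r * lam) / (c * de c).

Definition OmegaII (du de : R -> R) (c p d r lam be th : R) : Prop :=
  0 < be /\ X_val c p d r lam / du 1 < th /\
  (p * c + r * lam) / (c * de c) <= be.

Definition OmegaIII (du ie : R -> R) (c p d r lam be th : R) : Prop :=
  0 < be /\ X_val c p d r lam / du (a_val ie c p r be lam) <= th /\
  th <= X_val c p d r lam / du 1.

Definition OmegaIV (du de ie : R -> R) (c p d r lam be th : R) : Prop :=
  0 < be /\ th < X_val c p d r lam / du (a_val ie c p r be lam) /\
  th <= (be * c * de c + d * lam) / du 1.

(* x^{IV}_t(lam): the solution in (0,1] of th u'(x) - be c e'(x c) = d lam
   (chosen by Hilbert's epsilon; it is unique when it exists). *)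
Definition xIV (du de : R -> R) (c d th be lam : R) : R :=
  epsilon (inhabits 0)
    (fun x => 0 < x <= 1 /\ th * du x - be * c * de (x * c) = d * lam).

Definition W (du iu de ie : R -> R) (c p d r th be lam : R) : R * R :=
  if excluded_middle_informative (OmegaI du de c p d r lam be th) then (1, 0)
  else if excluded_middle_informative (OmegaII du de c p d r lam be th) then
    (1, 1 - a_val ie c p r be lam)
  else if excluded_middle_informative (OmegaIII du ie c p d r lam be th) then
    let x := iu (X_val c p d r lam / th) in (x, x - a_val ie c p r be lam)
  else if excluded_middle_informative (OmegaIV du de ie c p d r lam be th) then
    (xIV du de c d th be lam, 0)
  else (0, 0) (* unreachable: the four regions cover all (be,th) with be > 0 *).

Definition htilde (d r x z : R) : R := d * x + r * z.

Definition A_usage (T : nat) (d r c p th be : nat -> R) (du iu de ie : nat -> R -> R)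
    (lam : R) : R :=
  sum_n_m (fun t => let w := W (du t) (iu t) (de t) (ie t) (c t) (p t) (d t) (r t)
                                 (th t) (be t) lam in
                    htilde (d t) (r t) (fst w) (snd w)) 1 T.

Definition lam_dagger T Q d r c p th be du iu de ie : Rbar :=
  Glb_Rbar (fun lam => 0 <= lam /\ A_usage T d r c p th be du iu de ie lam <= Q).

(* lam^* = min(pi, lam^dagger) (a finite real since pi is finite) *)
Definition lam_star T Q pi d r c p th be du iu de ie : R :=
  real (Rbar_min (Finite pi) (lam_dagger T Q d r c p th be du iu de ie)).

(* ---------- KKT conditions of problem (P) ----------
   Constraints (written g >= 0) and multipliers:
     z_t >= 0          : al t
     x_t - z_t >= 0    : ga t
     1 - x_t >= 0      : dl t
     s >= 0            : nu
     (C) s - (sum_t h~_t(x_t,z_t) - Q) >= 0 : lam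
   Lagrangian  L = sum_t f~_t(x_t,z_t) - pi s + sum_t (al z + ga (x - z) + dl (1 - x))
                   + nu s + lam (s - sum_t h~_t + Q),
   with  d f~_t/dx = th u'(x) - be c e'((x-z)c),  d f~_t/dz = be c e'((x-z)c) - p c. *)
Definition KKT_point (T : nat) (Q pi : R) (d r c p th be : nat -> R)
    (du de : nat -> R -> R) (x z : nat -> R) (s lam : R) : Prop :=
  (forall t, (1 <= t <= T)%nat -> 0 <= z t /\ z t <= x t /\ x t <= 1) /\
  0 <= s /\
  sum_n_m (fun t => htilde (d t) (r t) (x t) (z t)) 1 T - Q <= s /\
  (* u_t is differentiable at x_t (needed for stationarity to make sense) *)
  (forall t, (1 <= t <= T)%nat -> 0 < x t) /\
  0 <= lam /\
  exists (al ga dl : nat -> R) (nu : R),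
    (forall t, (1 <= t <= T)%nat -> 0 <= al t /\ 0 <= ga t /\ 0 <= dl t) /\
    0 <= nu /\
    (forall t, (1 <= t <= T)%nat ->
       th t * du t (x t) - be t * c t * de t ((x t - z t) * c t)
         + ga t - dl t - lam * d t = 0) /\
    (forall t, (1 <= t <= T)%nat ->
       be t * c t * de t ((x t - z t) * c t) - p t * c t
         + al t - ga t - lam * r t = 0) /\
    - pi + nu + lam = 0 /\
    (forall t, (1 <= t <= T)%nat ->
       al t * z t = 0 /\ ga t * (x t - z t) = 0 /\ dl t * (1 - x t) = 0) /\
    nu * s = 0 /\
    lam * (s - (sum_n_m (fun t => htilde (d t) (r t) (x t) (z t)) 1 T - Q)) = 0.

(* Main.v *)
Require Import Defs.
From Stdlib Require Import Reals Lra Lia Arith ClassicalEpsilon.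
From Coquelicot Require Import Coquelicot.
Open Scope R_scope.

Definition nearR (l0 : R) (P : R -> Prop) :=
  exists del, 0 < del /\ forall l, 0 <= l -> Rabs (l - l0) < del -> P l.
Definition rc (g : R -> R) l0 :=
  forall eps, 0 < eps -> nearR l0 (fun l => Rabs (g l - g l0) < eps).

Lemma nearR_and l0 P Q : nearR l0 P -> nearR l0 Q -> nearR l0 (fun l => P l /\ Q l).
Proof.
  intros [d1 [H1 P1]] [d2 [H2 P2]]. exists (Rmin d1 d2). split.
  - apply Rmin_glb_lt; auto.
  - intros l Hl Hd. split.
    + apply P1; auto. eapply Rlt_le_trans; [exact Hd| apply Rmin_l].
    + apply P2; auto. eapply Rlt_le_trans; [exact Hd| apply Rmin_r].
Qed.

Lemma nearR_imp l0 (P Q : R -> Prop) : nearR l0 P -> (forall l, 0 <= l -> P l -> Q l) -> nearR l0 Q.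
Proof. intros [d [H1 H2]] H. exists d. split; auto. Qed.

Lemma nearR_true l0 (P : R -> Prop) : (forall l, 0 <= l -> P l) -> nearR l0 P.
Proof. intros H. exists 1. split; [lra|]. intros; auto. Qed.

Lemma rc_ev_pos g l0 : rc g l0 -> 0 < g l0 -> nearR l0 (fun l => 0 < g l).
Proof.
  intros H Hp. apply (nearR_imp _ _ _ (H (g l0) Hp)). intros l _ Hl.
  revert Hl. split_Rabs; lra.
Qed.

Lemma rc_ev_neg g l0 : rc g l0 -> g l0 < 0 -> nearR l0 (fun l => g l < 0).
Proof.
  intros H Hp. assert (0 < - g l0) by lra.
  apply (nearR_imp _ _ _ (H _ H0)). intros l _ Hl.
  revert Hl. split_Rabs; lra.
Qed.

Lemma rc_of_bounds g l0 :
  (forall eps, 0 < eps -> nearR l0 (fun l => g l0 - eps < g l /\ g l < g l0 + eps)) -> rc g l0.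
Proof.
  intros H eps He. apply (nearR_imp _ _ _ (H eps He)). intros l _ [A B].
  split_Rabs; lra.
Qed.

Lemma rc_lip g l0 K : 0 <= K -> (forall l, 0 <= l -> Rabs (g l - g l0) <= K * Rabs (l - l0)) -> rc g l0.
Proof.
  intros HK H eps He. exists (eps / (K + 1)). split.
  - apply Rdiv_lt_0_compat; lra.
  - intros l Hl Hd. eapply Rle_lt_trans; [apply H; auto|].
    assert (Rabs (l - l0) * (K+1) < eps).
    { apply (Rmult_lt_compat_r (K+1)) in Hd; [|lra].
      unfold Rdiv in Hd. rewrite Rmult_assoc, Rinv_l in Hd; lra. }
    assert (0 <= Rabs (l - l0)) by apply Rabs_pos. nra.
Qed.

Lemma rc_const c l0 : rc (fun _ => c) l0.
Proof. apply (rc_lip _ _ 0); [lra|]. intros. replace (c - c) with 0 by ring. rewrite Rabs_R0. nra. Qed.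

Lemma rc_ext f g l0 : (forall l, f l = g l) -> rc f l0 -> rc g l0.
Proof. intros E H eps He. apply (nearR_imp _ _ _ (H eps He)). intros l _. rewrite !E. auto. Qed.

Lemma rc_plus f g l0 : rc f l0 -> rc g l0 -> rc (fun l => f l + g l) l0.
Proof.
  intros Hf Hg eps He. assert (0 < eps/2) by lra.
  apply (nearR_imp _ _ _ (nearR_and _ _ _ (Hf _ H) (Hg _ H))). intros l _ [A B].
  revert A B. split_Rabs; lra.
Qed.

Lemma rc_comb d r x a l0 : rc x l0 -> rc a l0 ->
  rc (fun l => d * x l + r * Rmax 0 (x l - a l)) l0.
Proof.
  intros Hx Ha eps He. set (K := Rabs d + Rabs r).
  assert (HK : 0 <= K) by (unfold K; pose proof (Rabs_pos d); pose proof (Rabs_pos r); lra).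
  set (e := eps / (2 * K + 1)).
  assert (He' : 0 < e) by (apply Rdiv_lt_0_compat; lra).
  assert (Hee : 2 * K * e < eps).
  { unfold e. apply (Rmult_lt_reg_r (2*K+1)); [lra|].
    unfold Rdiv. rewrite Rmult_assoc, (Rmult_assoc eps), Rinv_l by lra. nra. }
  apply (nearR_imp _ _ _ (nearR_and _ _ _ (Hx _ He') (Ha _ He'))). intros l _ [A B].
  assert (HM : Rabs (Rmax 0 (x l - a l) - Rmax 0 (x l0 - a l0)) <= Rabs (x l - x l0) + Rabs (a l - a l0)).
  { unfold Rmax; repeat destruct Rle_dec; split_Rabs; lra. }
  replace (d * x l + r * Rmax 0 (x l - a l) - (d * x l0 + r * Rmax 0 (x l0 - a l0)))
    with (d * (x l - x l0) + r * (Rmax 0 (x l - a l) - Rmax 0 (x l0 - a l0))) by ring.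
  eapply Rle_lt_trans; [apply Rabs_triang|]. rewrite !Rabs_mult.
  assert (Rabs d * Rabs (x l - x l0) <= Rabs d * e) by (apply Rmult_le_compat_l; [apply Rabs_pos|lra]).
  assert (Rabs r * Rabs (Rmax 0 (x l - a l) - Rmax 0 (x l0 - a l0)) <= Rabs r * (2*e)).
  { apply Rmult_le_compat_l; [apply Rabs_pos|lra]. }
  unfold K in *. pose proof (Rabs_pos d). pose proof (Rabs_pos r). nra.
Qed.

Lemma rc_sum (f : nat -> R -> R) l0 : forall n,
  (forall t, (1 <= t <= n)%nat -> rc (f t) l0) ->
  rc (fun l => sum_n_m (fun t => f t l) 1 n) l0.
Proof.
  induction n; intros H.
  - apply (rc_ext (fun _ => 0)). { intros. rewrite sum_n_m_zero; auto. }
    apply rc_const.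
  - apply (rc_ext (fun l => sum_n_m (fun t => f t l) 1 n + f (S n) l)).
    { intros. rewrite sum_n_Sm; [reflexivity| lia]. }
    apply rc_plus.
    + apply IHn. intros t Ht. apply H. lia.
    + apply H. lia.
Qed.

Lemma rc_ext0 f g l0 : 0 <= l0 -> (forall l, 0 <= l -> f l = g l) -> rc f l0 -> rc g l0.
Proof. intros H0 E H eps He. apply (nearR_imp _ _ _ (H eps He)). intros l Hl. rewrite !E; auto. Qed.

Lemma du_cont u du iu : u_hyp u du iu -> forall x0, 0 < x0 -> forall eps, 0 < eps ->
  exists del, 0 < del /\ forall x, Rabs (x - x0) < del -> 0 < x /\ Rabs (du x - du x0) < eps.
Proof.
  intros HU x0 Hx0 eps He.
  destruct HU as (_&_&_&_&Hp&Hdec&_&Hiu).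
  pose proof (Hp x0 Hx0) as Hd0.
  set (y1 := du x0 + eps). set (y2 := Rmax (du x0 - eps) (du x0 / 2)).
  assert (Hy1 : 0 < y1) by (unfold y1; lra).
  assert (Hy2 : 0 < y2) by (unfold y2, Rmax; destruct Rle_dec; lra).
  assert (Hy2' : y2 < du x0) by (unfold y2, Rmax; destruct Rle_dec; lra).
  assert (Hy2'' : du x0 - eps <= y2) by apply Rmax_l.
  destruct (Hiu y1 Hy1) as [Hx1 Ex1]. destruct (Hiu y2 Hy2) as [Hx2 Ex2].
  set (x1 := iu y1) in *. set (x2 := iu y2) in *.
  assert (L1 : x1 < x0).
  { destruct (Rlt_le_dec x1 x0) as [h|h]; auto. destruct h as [h|h].
    - specialize (Hdec x0 x1 Hx0 h). unfold y1 in Ex1. lra.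
    - rewrite <- h in Ex1. unfold y1 in Ex1. lra. }
  assert (L2 : x0 < x2).
  { destruct (Rlt_le_dec x0 x2) as [h|h]; auto. destruct h as [h|h].
    - specialize (Hdec x2 x0 Hx2 h). lra.
    - rewrite h in Ex2. lra. }
  exists (Rmin (x0 - x1) (x2 - x0)). split.
  - apply Rmin_glb_lt; lra.
  - intros x Hx. pose proof (Rmin_l (x0 - x1) (x2 - x0)). pose proof (Rmin_r (x0 - x1) (x2 - x0)).
    assert (A1 : x1 < x) by (revert Hx; split_Rabs; lra).
    assert (A2 : x < x2) by (revert Hx; split_Rabs; lra).
    split; [lra|].
    pose proof (Hdec x1 x Hx1 A1). assert (0 < x) by lra. specialize (Hp x H2).
    assert (du x2 < du x) by (apply Hdec; lra).
    unfold y1 in Ex1. split_Rabs; lra.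
Qed.

Lemma de_cont e de ie : e_hyp e de ie -> forall x0, 0 <= x0 -> forall eps, 0 < eps ->
  exists del, 0 < del /\ forall x, 0 <= x -> Rabs (x - x0) < del -> Rabs (de x - de x0) < eps.
Proof.
  intros HE x0 Hx0 eps He. destruct HE as (_&_&_&Hc&_).
  specialize (Hc x0 Hx0). apply (proj1 (filterlim_locally _ _)) with (eps := mkposreal eps He) in Hc.
  destruct Hc as [d Hd]. exists d. split; [apply cond_pos|].
  intros x Hx Hxd. apply (Hd x Hxd Hx).
Qed.

Lemma ivt_dec f a b : a < b ->
  (forall x, a <= x <= b -> forall eps, 0 < eps -> exists del, 0 < del /\
     forall y, a <= y <= b -> Rabs (y - x) < del -> Rabs (f y - f x) < eps) ->
  0 < f a -> f b < 0 -> exists x, a <= x <= b /\ f x = 0.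
Proof.
  intros Hab Hc Ha Hb.
  set (cl := fun y => Rmax a (Rmin y b)).
  assert (Hcl : forall y, a <= cl y <= b) by (intros; unfold cl, Rmax, Rmin; repeat destruct Rle_dec; lra).
  assert (Hcl2 : forall y y', Rabs (cl y - cl y') <= Rabs (y - y'))
    by (intros; unfold cl, Rmax, Rmin; repeat destruct Rle_dec; split_Rabs; lra).
  assert (Hcla : cl a = a) by (unfold cl, Rmax, Rmin; repeat destruct Rle_dec; lra).
  assert (Hclb : cl b = b) by (unfold cl, Rmax, Rmin; repeat destruct Rle_dec; lra).
  destruct (IVT (fun y => - f (cl y)) a b) as [z [Hz Fz]]; auto.
  - intros x. unfold continuity_pt, continue_in, limit1_in, limit_in. simpl. unfold R_dist.
    intros eps He. destruct (Hc (cl x) (Hcl x) eps He) as [del [Hd Hdd]].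
    exists del. split; auto. intros y [_ Hy].
    replace (- f (cl y) - - f (cl x)) with (- (f (cl y) - f (cl x))) by ring.
    rewrite Rabs_Ropp. apply Hdd; auto. eapply Rle_lt_trans; [apply Hcl2|]; auto.
  - rewrite Hcla. lra.
  - rewrite Hclb. lra.
  - exists z. split; auto. assert (cl z = z) by (unfold cl, Rmax, Rmin; repeat destruct Rle_dec; lra).
    rewrite H in Fz. lra.
Qed.

Lemma global_lam (Af : R -> R) (Q pi : R) :
  0 < pi -> (forall l, 0 <= l -> rc Af l) ->
  let L := Glb_Rbar (fun l => 0 <= l /\ Af l <= Q) in
  let lam := real (Rbar_min (Finite pi) L) in
  0 <= lam <= pi /\ (lam < pi -> Af lam <= Q) /\ (0 < lam -> Q <= Af lam).
Proof.
  intros Hpi Hc L lam.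
  destruct (Glb_Rbar_correct (fun l => 0 <= l /\ Af l <= Q)) as [Hlb Hglb].
  fold L in Hlb, Hglb.
  assert (H0 : Rbar_le 0 L). { apply Hglb. intros x [Hx _]. simpl. auto. }
  unfold lam; clear lam.
  destruct L as [l| |] eqn:EL; simpl in H0 |- *; try contradiction.
  -
    assert (F1 : forall x, 0 <= x < l -> Q < Af x).
    { intros x Hx. destruct (Rlt_dec Q (Af x)); auto. exfalso.
      specialize (Hlb x (conj (proj1 Hx) (Rnot_lt_le _ _ n))). simpl in Hlb. lra. }
    assert (F2 : Af l <= Q).
    { destruct (Rle_dec (Af l) Q) as [h|h]; auto. exfalso.
      assert (Hp : 0 < Af l - Q) by lra.
      destruct (rc_ev_pos (fun x => Af x - Q) l) as [del [Hd Hn]]; auto.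
      { intros e He. destruct (Hc l H0 e He) as [dd [Hdd Hdd']]. exists dd; split; auto.
        intros x Hx Hx'. specialize (Hdd' x Hx Hx'). replace (Af x - Q - (Af l - Q)) with (Af x - Af l) by ring. auto. }
      assert (Hb : Rbar_le (l + del) l).
      { apply Hglb. intros x [Hx HA]. simpl. destruct (Rle_dec (l + del) x); auto.
        exfalso. specialize (Hlb x (conj Hx HA)). simpl in Hlb.
        specialize (Hn x Hx). assert (0 < Af x - Q). { apply Hn. split_Rabs; lra. } lra. }
      simpl in Hb. lra. }
    assert (F3 : 0 < l -> Q <= Af l).
    { intros Hl. destruct (Rle_dec Q (Af l)) as [h|h]; auto. exfalso.
      assert (Hp : Af l - Q < 0) by lra.
      destruct (rc_ev_neg (fun x => Af x - Q) l) as [del [Hd Hn]]; auto.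
      { intros e He. destruct (Hc l H0 e He) as [dd [Hdd Hdd']]. exists dd; split; auto.
        intros x Hx Hx'. specialize (Hdd' x Hx Hx'). replace (Af x - Q - (Af l - Q)) with (Af x - Af l) by ring. auto. }
      set (x := Rmax 0 (l - del / 2)).
      assert (Hx0 : 0 <= x) by apply Rmax_l.
      assert (Hxl : x < l) by (unfold x; unfold Rmax; destruct Rle_dec; lra).
      assert (Hxd : Rabs (x - l) < del) by (unfold x; unfold Rmax; destruct Rle_dec; split_Rabs; lra).
      specialize (Hn x Hx0 Hxd). specialize (F1 x (conj Hx0 Hxl)). lra. }
    unfold Rmin. destruct Rle_dec as [h|h].
    + split; [lra|]. split; [lra|]. intros _.
      destruct (Req_dec pi l). { subst. apply F3; lra. }
      left. apply F1. lra.
    + split; [lra|]. split; [auto|]. auto.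
  -
    split; [lra|]. split; [lra|]. intros _.
    destruct (Rle_dec Q (Af pi)) as [h|h]; auto. exfalso.
    specialize (Hlb pi (conj (Rlt_le _ _ Hpi) (Rlt_le _ _ (Rnot_le_lt _ _ h)))). simpl in Hlb. auto.
Qed.

Lemma divle a b x : 0 < b -> a / b <= x -> a <= x * b.
Proof. intros Hb H. replace a with (a / b * b) by (field; lra). apply Rmult_le_compat_r; lra. Qed.
Lemma ledivle a b x : 0 < b -> x <= a / b -> x * b <= a.
Proof. intros Hb H. replace a with (a / b * b) by (field; lra). apply Rmult_le_compat_r; lra. Qed.
Lemma divlt a b x : 0 < b -> a / b < x -> a < x * b.
Proof. intros Hb H. replace a with (a / b * b) by (field; lra). apply Rmult_lt_compat_r; lra. Qed.
Lemma ltdivlt a b x : 0 < b -> x < a / b -> x * b < a.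
Proof. intros Hb H. replace a with (a / b * b) by (field; lra). apply Rmult_lt_compat_r; lra. Qed.

Definition phyp (c p d r th be : R) := 0 <= d /\ 0 <= r /\ 0 < c /\ 0 < p /\ 0 < th /\ 0 < be.

Lemma de0 e de ie : e_hyp e de ie -> de 0 = 0.
Proof.
  intros HE. destruct HE as (_&_&_&_&Hp&Hinc&Hs&_).
  destruct (Hs 0 (Rle_refl 0)) as [x [Hx Ex]]. destruct Hx as [Hx|Hx].
  - specialize (Hinc 0 x (Rle_refl 0) Hx). specialize (Hp 0 (Rle_refl 0)). lra.
  - subst. auto.
Qed.

Lemma de_lt e de ie : e_hyp e de ie -> forall x y, 0 <= x -> x < y -> de x < de y.
Proof. intros HE. destruct HE as (_&_&_&_&_&Hinc&_). auto. Qed.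

Lemma de_le e de ie : e_hyp e de ie -> forall x y, 0 <= x -> x <= y -> de x <= de y.
Proof. intros HE x y Hx [h|h]. - left. eapply de_lt; eauto. - subst; lra. Qed.

Lemma de_nonneg e de ie : e_hyp e de ie -> forall x, 0 <= x -> 0 <= de x.
Proof. intros HE. destruct HE as (_&_&_&_&Hp&_). auto. Qed.

Lemma du_pos u du iu : u_hyp u du iu -> forall x, 0 < x -> 0 < du x.
Proof. intros HU. destruct HU as (_&_&_&_&Hp&_). auto. Qed.

Lemma du_lt u du iu : u_hyp u du iu -> forall x y, 0 < x -> x < y -> du y < du x.
Proof. intros HU. destruct HU as (_&_&_&_&_&Hd&_). auto. Qed.

Lemma iu_spec u du iu : u_hyp u du iu -> forall y, 0 < y -> 0 < iu y /\ du (iu y) = y.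
Proof. intros HU. destruct HU as (_&_&_&_&_&_&_&Hi). auto. Qed.

Lemma a_facts e de ie c p r be lam : e_hyp e de ie -> 0 <= r -> 0 < c -> 0 < p -> 0 < be -> 0 <= lam ->
  0 < a_val ie c p r be lam /\ be * c * de (a_val ie c p r be lam * c) = p * c + r * lam.
Proof.
  intros HE Hr Hc Hp Hb Hl.
  set (y := (p * c + r * lam) / (be * c)).
  assert (Hy : 0 < y) by (unfold y; apply Rdiv_lt_0_compat; nra).
  pose proof HE as HE'. destruct HE' as (_&_&_&_&_&_&_&Hie).
  destruct (Hie y (Rlt_le _ _ Hy)) as [H1 H2].
  assert (Hac : a_val ie c p r be lam * c = ie y) by (unfold a_val; fold y; field; lra).
  rewrite Hac, H2. split.
  - unfold a_val; fold y. destruct H1 as [H1|H1].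
    + apply Rmult_lt_0_compat; auto. apply Rinv_0_lt_compat; auto.
    + rewrite <- H1 in H2. rewrite (de0 _ _ _ HE) in H2. lra.
  - unfold y. field. lra.
Qed.

Definition psi (du de : R -> R) c p d r th be lam x :=
  th * du x - Rmin (be * c * de (x * c)) (p * c + r * lam) - d * lam.

Definition Wgood (du de ie : R -> R) c p d r th be lam (x z : R) : Prop :=
  0 < x <= 1 /\ 0 <= z <= x /\ z = Rmax 0 (x - a_val ie c p r be lam) /\
  (psi du de c p d r th be lam x = 0 \/ (x = 1 /\ 0 <= psi du de c p d r th be lam 1)) /\
  exists al ga dl, 0 <= al /\ 0 <= ga /\ 0 <= dl /\
    th * du x - be * c * de ((x - z) * c) + ga - dl - lam * d = 0 /\
    be * c * de ((x - z) * c) - p * c + al - ga - lam * r = 0 /\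
    al * z = 0 /\ ga * (x - z) = 0 /\ dl * (1 - x) = 0.

Section Regions.
End Regions.

Lemma regI u du iu e de ie c p d r th be lam :
  phyp c p d r th be -> u_hyp u du iu -> e_hyp e de ie -> 0 <= lam ->
  OmegaI du de c p d r lam be th -> Wgood du de ie c p d r th be lam 1 0.
Proof.
  intros (Hd&Hr&Hc&Hp&Hth&Hb) HU HE Hl (_&H1&H2). unfold Wgood.
  pose proof (du_pos _ _ _ HU 1 Rlt_0_1) as Hdu1.
  assert (Hdec : 0 < de c) by (rewrite <- (de0 _ _ _ HE); eapply de_lt; eauto; lra).
  apply divlt in H1; auto. apply ltdivlt in H2; [|nra].
  destruct (a_facts _ _ _ c p r be lam HE Hr Hc Hp Hb Hl) as [Ha0 Ha].
  set (a := a_val ie c p r be lam) in *.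
  assert (Ha1 : 1 < a).
  { destruct (Rlt_le_dec 1 a) as [h|h]; auto. exfalso.
    assert (de (a * c) <= de c) by (apply (de_le _ _ _ HE); nra).
    assert (be * c * de (a * c) <= be * c * de c) by (apply Rmult_le_compat_l; nra).
    nra. }
  split; [lra|]. split; [lra|]. split.
  { symmetry. apply Rmax_left. lra. }
  split.
  { right. split; auto. unfold psi. rewrite Rmult_1_l.
    pose proof (Rmin_l (be * c * de c) (p * c + r * lam)). nra. }
  exists (p * c + r * lam - be * c * de c), 0, (th * du 1 - be * c * de c - d * lam).
  replace ((1 - 0) * c) with c by ring.
  repeat split; try nra; try ring.
Qed.

Lemma regII u du iu e de ie c p d r th be lam :
  phyp c p d r th be -> u_hyp u du iu -> e_hyp e de ie -> 0 <= lam ->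
  OmegaII du de c p d r lam be th ->
  Wgood du de ie c p d r th be lam 1 (1 - a_val ie c p r be lam).
Proof.
  intros (Hd&Hr&Hc&Hp&Hth&Hb) HU HE Hl (_&H1&H2). unfold Wgood.
  pose proof (du_pos _ _ _ HU 1 Rlt_0_1) as Hdu1.
  assert (Hdec : 0 < de c) by (rewrite <- (de0 _ _ _ HE); eapply de_lt; eauto; lra).
  unfold X_val in H1. apply divlt in H1; auto. apply divle in H2; [|nra].
  destruct (a_facts _ _ _ c p r be lam HE Hr Hc Hp Hb Hl) as [Ha0 Ha].
  set (a := a_val ie c p r be lam) in *.
  assert (Ha1 : a <= 1).
  { destruct (Rlt_le_dec 1 a) as [h|h]; auto. exfalso.
    assert (de c < de (a * c)) by (apply (de_lt _ _ _ HE); nra).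
    assert (be * c * de c < be * c * de (a * c)) by (apply Rmult_lt_compat_l; nra).
    nra. }
  split; [lra|]. split; [lra|]. split.
  { symmetry. apply Rmax_right. lra. }
  split.
  { right. split; auto. unfold psi. rewrite Rmult_1_l.
    pose proof (Rmin_r (be * c * de c) (p * c + r * lam)). nra. }
  exists 0, 0, (th * du 1 - (p * c + (d + r) * lam)).
  replace ((1 - (1 - a)) * c) with (a * c) by ring.
  repeat split; try nra; try ring.
Qed.

Lemma regIII u du iu e de ie c p d r th be lam :
  phyp c p d r th be -> u_hyp u du iu -> e_hyp e de ie -> 0 <= lam ->
  OmegaIII du ie c p d r lam be th ->
  let x := iu (X_val c p d r lam / th) in
  Wgood du de ie c p d r th be lam x (x - a_val ie c p r be lam).
Proof.
  intros (Hd&Hr&Hc&Hp&Hth&Hb) HU HE Hl (_&H1&H2) x. unfold Wgood.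
  pose proof (du_pos _ _ _ HU 1 Rlt_0_1) as Hdu1.
  destruct (a_facts _ _ _ c p r be lam HE Hr Hc Hp Hb Hl) as [Ha0 Ha].
  set (a := a_val ie c p r be lam) in *.
  pose proof (du_pos _ _ _ HU a Ha0) as Hdua.
  unfold X_val in *. set (X := p * c + (d + r) * lam) in *.
  assert (HX : 0 < X) by (unfold X; nra).
  apply divle in H1; auto. apply ledivle in H2; auto.
  assert (Hv : 0 < X / th) by (apply Rdiv_lt_0_compat; auto).
  destruct (iu_spec _ _ _ HU _ Hv) as [Hx0 Hxv]. fold x in Hx0, Hxv.
  assert (Hthx : th * du x = X) by (rewrite Hxv; field; lra).
  assert (Hx1 : x <= 1).
  { destruct (Rlt_le_dec 1 x) as [h|h]; auto. exfalso.
    pose proof (du_lt _ _ _ HU 1 x Rlt_0_1 h). nra. }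
  assert (Hxa : a <= x).
  { destruct (Rlt_le_dec x a) as [h|h]; auto. exfalso.
    pose proof (du_lt _ _ _ HU x a Hx0 h). nra. }
  split; [lra|]. split; [lra|]. split.
  { symmetry. apply Rmax_right. lra. }
  split.
  { left. unfold psi.
    assert (de (a * c) <= de (x * c)) by (apply (de_le _ _ _ HE); nra).
    assert (be * c * de (a * c) <= be * c * de (x * c)) by (apply Rmult_le_compat_l; nra).
    rewrite Rmin_right by nra. unfold X in Hthx. nra. }
  exists 0, 0, 0.
  replace ((x - (x - a)) * c) with (a * c) by ring.
  repeat split; try nra; try ring. unfold X in Hthx. nra.
Qed.

Lemma xIV_exists u du iu e de ie c p d r th be lam :
  phyp c p d r th be -> u_hyp u du iu -> e_hyp e de ie -> 0 <= lam ->
  th * du 1 <= be * c * de c + d * lam ->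
  exists x, 0 < x <= 1 /\ th * du x - be * c * de (x * c) = d * lam.
Proof.
  intros (Hd&Hr&Hc&Hp&Hth&Hb) HU HE Hl H1.
  set (f := fun x => th * du x - be * c * de (x * c) - d * lam).
  assert (Hdc : 0 <= de c) by (apply (de_nonneg _ _ _ HE); lra).
  assert (Hbcd : 0 <= be * c * de c) by (apply Rmult_le_pos; nra).
  assert (Hdl : 0 <= d * lam) by nra.
  set (M := (be * c * de c + d * lam) / th + 1).
  assert (HM : 0 < M).
  { unfold M. assert (0 <= (be * c * de c + d * lam) / th). { apply Rmult_le_pos; [lra|]. left; apply Rinv_0_lt_compat; auto. } lra. }
  destruct (iu_spec _ _ _ HU M HM) as [Hi1 Hi2].
  set (x0 := Rmin 1 (iu M)).
  assert (Hx0 : 0 < x0 <= 1) by (unfold x0, Rmin; destruct Rle_dec; lra).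
  assert (Hdux0 : M <= du x0).
  { unfold x0, Rmin; destruct Rle_dec as [h|h].
    - destruct h as [h|h]. + pose proof (du_lt _ _ _ HU 1 (iu M) Rlt_0_1 h). lra.
      + rewrite h, Hi2. lra.
    - lra. }
  assert (Hf0 : 0 < f x0).
  { unfold f. assert (de (x0 * c) <= de c) by (apply (de_le _ _ _ HE); nra).
    assert (be * c * de (x0 * c) <= be * c * de c) by (apply Rmult_le_compat_l; nra).
    assert (th * M <= th * du x0) by (apply Rmult_le_compat_l; lra).
    assert (th * M = be * c * de c + d * lam + th) by (unfold M; field; lra).
    lra. }
  assert (Hf1 : f 1 <= 0) by (unfold f; rewrite Rmult_1_l; lra).
  destruct Hf1 as [Hf1|Hf1].
  2:{ exists 1. split; [lra|]. unfold f in Hf1. lra. }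
  assert (Hx01 : x0 < 1).
  { destruct Hx0 as [_ [h|h]]; auto. rewrite h in Hf0. lra. }
  destruct (ivt_dec f x0 1) as [x [Hx Fx]]; auto.
  - intros x Hx eps He.
    assert (Hxp : 0 < x) by lra.
    assert (He1 : 0 < eps / (2 * th)) by (apply Rdiv_lt_0_compat; lra).
    assert (He2 : 0 < eps / (2 * (be * c))) by (apply Rdiv_lt_0_compat; nra).
    destruct (du_cont _ _ _ HU x Hxp _ He1) as [d1 [Hd1 P1]].
    destruct (de_cont _ _ _ HE (x * c) ltac:(nra) _ He2) as [d2 [Hd2 P2]].
    exists (Rmin d1 (d2 / c)). split.
    { apply Rmin_glb_lt; auto. apply Rdiv_lt_0_compat; auto. }
    intros y Hy Hyx.
    assert (Hy1 : Rabs (y - x) < d1) by (eapply Rlt_le_trans; [exact Hyx|apply Rmin_l]).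
    assert (Hy2 : Rabs (y - x) < d2 / c) by (eapply Rlt_le_trans; [exact Hyx|apply Rmin_r]).
    destruct (P1 y Hy1) as [_ Q1].
    assert (Q2 : Rabs (de (y * c) - de (x * c)) < eps / (2 * (be * c))).
    { apply P2; [nra|]. replace (y * c - x * c) with ((y - x) * c) by ring.
      rewrite Rabs_mult, (Rabs_pos_eq c) by lra. apply ltdivlt in Hy2; auto. }
    unfold f.
    replace (th * du y - be * c * de (y * c) - d * lam - (th * du x - be * c * de (x * c) - d * lam))
      with (th * (du y - du x) - (be * c) * (de (y * c) - de (x * c))) by ring.
    assert (A1 : Rabs (th * (du y - du x)) < eps / 2).
    { rewrite Rabs_mult, (Rabs_pos_eq th) by lra.
      replace (eps / 2) with (eps / (2 * th) * th) by (field; lra).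
      rewrite Rmult_comm. apply Rmult_lt_compat_r; lra. }
    assert (A2 : Rabs (be * c * (de (y * c) - de (x * c))) < eps / 2).
    { rewrite Rabs_mult, (Rabs_pos_eq (be * c)) by nra.
      replace (eps / 2) with (eps / (2 * (be * c)) * (be * c)) by (field; nra).
      rewrite Rmult_comm. apply Rmult_lt_compat_r; nra. }
    revert A1 A2. split_Rabs; lra.
  - exists x. split; [lra|]. unfold f in Fx. lra.
Qed.

Lemma regIV u du iu e de ie c p d r th be lam :
  phyp c p d r th be -> u_hyp u du iu -> e_hyp e de ie -> 0 <= lam ->
  OmegaIV du de ie c p d r lam be th ->
  Wgood du de ie c p d r th be lam (xIV du de c d th be lam) 0.
Proof.
  intros HP HU HE Hl (_&H1&H2). pose proof HP as (Hd&Hr&Hc&Hp&Hth&Hb). unfold Wgood.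
  pose proof (du_pos _ _ _ HU 1 Rlt_0_1) as Hdu1.
  apply ledivle in H2; auto.
  destruct (xIV_exists u du iu e de ie c p d r th be lam HP HU HE Hl H2) as [x0 Hx0].
  pose proof (epsilon_spec (inhabits 0)
    (fun x => 0 < x <= 1 /\ th * du x - be * c * de (x * c) = d * lam) (ex_intro _ x0 Hx0)) as Hs.
  fold (xIV du de c d th be lam) in Hs. set (x := xIV du de c d th be lam) in *.
  destruct Hs as [Hx Hxe].
  destruct (a_facts _ _ _ c p r be lam HE Hr Hc Hp Hb Hl) as [Ha0 Ha].
  set (a := a_val ie c p r be lam) in *.
  pose proof (du_pos _ _ _ HU a Ha0) as Hdua.
  unfold X_val in H1. apply ltdivlt in H1; auto.
  assert (Hxa : x <= a).
  { destruct (Rlt_le_dec a x) as [h|h]; auto. exfalso.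
    pose proof (du_lt _ _ _ HU a x Ha0 h).
    assert (de (a * c) < de (x * c)) by (apply (de_lt _ _ _ HE); nra).
    assert (be * c * de (a * c) < be * c * de (x * c)) by (apply Rmult_lt_compat_l; nra).
    assert (th * du x < th * du a) by (apply Rmult_lt_compat_l; lra).
    nra. }
  assert (de (x * c) <= de (a * c)) by (apply (de_le _ _ _ HE); nra).
  assert (be * c * de (x * c) <= be * c * de (a * c)) by (apply Rmult_le_compat_l; nra).
  split; [lra|]. split; [lra|]. split.
  { symmetry. apply Rmax_left. lra. }
  split.
  { left. unfold psi. rewrite Rmin_left by nra. lra. }
  exists (p * c + r * lam - be * c * de (x * c)), 0, 0.
  replace ((x - 0) * c) with (x * c) by ring.
  repeat split; try nra; try ring.
Qed.

Lemma W_spec u du iu e de ie c p d r th be lam :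
  phyp c p d r th be -> u_hyp u du iu -> e_hyp e de ie -> 0 <= lam ->
  let w := W du iu de ie c p d r th be lam in
  Wgood du de ie c p d r th be lam (fst w) (snd w).
Proof.
  intros HP HU HE Hl w. unfold w, W.
  destruct (excluded_middle_informative _) as [h1|h1]; [eapply regI; eauto|].
  destruct (excluded_middle_informative _) as [h2|h2]; [eapply regII; eauto|].
  destruct (excluded_middle_informative _) as [h3|h3]; [eapply regIII; eauto|].
  destruct (excluded_middle_informative _) as [h4|h4]; [eapply regIV; eauto|].
  exfalso. pose proof HP as (Hd&Hr&Hc&Hp&Hth&Hb).
  unfold OmegaI, OmegaII, OmegaIII, OmegaIV in *.
  set (K := (be * c * de c + d * lam) / du 1) in *.
  set (X1 := X_val c p d r lam / du 1) in *.
  set (Xa := X_val c p d r lam / du (a_val ie c p r be lam)) in *.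
  set (y0 := (p * c + r * lam) / (c * de c)) in *.
  pose proof (du_pos _ _ _ HU 1 Rlt_0_1) as Hdu1.
  assert (Hdec : 0 < de c) by (rewrite <- (de0 _ _ _ HE); eapply de_lt; eauto; lra).
  assert (HKX : be < y0 -> K < X1).
  { intros h. unfold K, X1, X_val, Rdiv. apply Rmult_lt_compat_r; [apply Rinv_0_lt_compat; auto|].
    apply ltdivlt in h; nra. }
  assert (HKX' : y0 <= be -> X1 <= K).
  { intros h. unfold K, X1, X_val, Rdiv. apply Rmult_le_compat_r; [left; apply Rinv_0_lt_compat; auto|].
    apply divle in h; nra. }
  destruct (Rle_dec th X1) as [t1|t1].
  - assert (th < Xa) by (destruct (Rle_dec Xa th); [exfalso; apply h3; auto|lra]).
    assert (K < th) by (destruct (Rle_dec th K); [exfalso; apply h4; auto|lra]).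
    assert (y0 <= be) by (destruct (Rle_dec y0 be); [auto|exfalso; apply h1; repeat split; auto; lra]).
    specialize (HKX' H1). lra.
  - assert (be < y0) by (destruct (Rle_dec y0 be); [exfalso; apply h2; repeat split; auto; lra|lra]).
    assert (th <= K) by (destruct (Rle_dec th K); [auto|exfalso; apply h1; repeat split; auto; lra]).
    specialize (HKX H). lra.
Qed.

Lemma rc_root (F : R -> R -> R) (rt : R -> R) lo hi l0 :
  0 <= l0 ->
  (forall l, 0 <= l -> lo <= rt l <= hi) ->
  (forall l x, 0 <= l -> lo < x -> x < rt l -> 0 < F l x) ->
  (forall l x, 0 <= l -> rt l < x -> x < hi -> F l x < 0) ->
  (forall x, lo < x < hi -> rc (fun l => F l x) l0) ->
  rc rt l0.
Proof.
  intros Hl0 Hr Hpos Hneg Hc. apply rc_of_bounds. intros eps He.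
  destruct (Hr l0 Hl0) as [R1 R2].
  apply nearR_and.
  - destruct (Rle_dec (rt l0 - eps / 2) lo) as [h|h].
    + apply nearR_true. intros l Hl. destruct (Hr l Hl). lra.
    + set (x1 := rt l0 - eps / 2).
      assert (P : 0 < F l0 x1) by (apply Hpos; unfold x1; auto; lra).
      apply (nearR_imp _ _ _ (rc_ev_pos _ _ (Hc x1 ltac:(unfold x1; lra)) P)).
      intros l Hl Fl. destruct (Rle_dec x1 (rt l)) as [h'|h']. { unfold x1 in h'; lra. }
      exfalso. assert (F l x1 < 0) by (apply Hneg; auto; unfold x1 in *; lra). lra.
  - destruct (Rle_dec hi (rt l0 + eps / 2)) as [h|h].
    + apply nearR_true. intros l Hl. destruct (Hr l Hl). lra.
    + set (x2 := rt l0 + eps / 2).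
      assert (P : F l0 x2 < 0) by (apply Hneg; unfold x2; auto; lra).
      apply (nearR_imp _ _ _ (rc_ev_neg _ _ (Hc x2 ltac:(unfold x2; lra)) P)).
      intros l Hl Fl. destruct (Rle_dec (rt l) x2) as [h'|h']. { unfold x2 in h'; lra. }
      exfalso. assert (0 < F l x2) by (apply Hpos; auto; unfold x2 in *; lra). lra.
Qed.

Lemma rc_root_unb (F : R -> R -> R) (rt : R -> R) lo l0 :
  0 <= l0 ->
  (forall l, 0 <= l -> lo <= rt l) ->
  (forall l x, 0 <= l -> lo < x -> x < rt l -> 0 < F l x) ->
  (forall l x, 0 <= l -> rt l < x -> F l x < 0) ->
  (forall x, lo < x -> rc (fun l => F l x) l0) ->
  rc rt l0.
Proof.
  intros Hl0 Hr Hpos Hneg Hc. apply rc_of_bounds. intros eps He.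
  pose proof (Hr l0 Hl0) as R1.
  apply nearR_and.
  - destruct (Rle_dec (rt l0 - eps / 2) lo) as [h|h].
    + apply nearR_true. intros l Hl. pose proof (Hr l Hl). lra.
    + set (x1 := rt l0 - eps / 2).
      assert (P : 0 < F l0 x1) by (apply Hpos; unfold x1; auto; lra).
      apply (nearR_imp _ _ _ (rc_ev_pos _ _ (Hc x1 ltac:(unfold x1; lra)) P)).
      intros l Hl Fl. destruct (Rle_dec x1 (rt l)) as [h'|h']. { unfold x1 in h'; lra. }
      exfalso. assert (F l x1 < 0) by (apply Hneg; auto; unfold x1 in *; lra). lra.
  - set (x2 := rt l0 + eps / 2).
    assert (P : F l0 x2 < 0) by (apply Hneg; unfold x2; auto; lra).
    apply (nearR_imp _ _ _ (rc_ev_neg _ _ (Hc x2 ltac:(unfold x2; lra)) P)).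
    intros l Hl Fl. destruct (Rle_dec (rt l) x2) as [h'|h']. { unfold x2 in h'; lra. }
    exfalso. assert (0 < F l x2) by (apply Hpos; auto; unfold x2 in *; lra). lra.
Qed.

Lemma Rmin_lip A B1 B2 : Rabs (Rmin A B1 - Rmin A B2) <= Rabs (B1 - B2).
Proof. unfold Rmin; repeat destruct Rle_dec; split_Rabs; lra. Qed.

Lemma psi_rc du de c p d r th be x l0 : 0 <= d -> 0 <= r ->
  rc (fun l => psi du de c p d r th be l x) l0.
Proof.
  intros Hd Hr. apply (rc_lip _ _ (r + d)); [lra|]. intros l Hl. unfold psi.
  pose proof (Rmin_lip (be * c * de (x * c)) (p * c + r * l) (p * c + r * l0)).
  replace (p * c + r * l - (p * c + r * l0)) with (r * (l - l0)) in H by ring.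
  rewrite Rabs_mult, (Rabs_pos_eq r) in H by lra.
  replace (th * du x - Rmin (be * c * de (x * c)) (p * c + r * l) - d * l -
    (th * du x - Rmin (be * c * de (x * c)) (p * c + r * l0) - d * l0))
   with (- (Rmin (be * c * de (x * c)) (p * c + r * l) - Rmin (be * c * de (x * c)) (p * c + r * l0)) - d * (l - l0)) by ring.
  eapply Rle_trans; [apply Rabs_triang|]. rewrite Rabs_Ropp, Rabs_Ropp, Rabs_mult, (Rabs_pos_eq d) by lra.
  lra.
Qed.

Lemma psi_dec u du iu e de ie c p d r th be l x y :
  phyp c p d r th be -> u_hyp u du iu -> e_hyp e de ie ->
  0 < x -> x < y -> psi du de c p d r th be l y < psi du de c p d r th be l x.
Proof.
  intros (Hd&Hr&Hc&Hp&Hth&Hb) HU HE Hx Hxy. unfold psi.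
  pose proof (du_lt _ _ _ HU x y Hx Hxy).
  assert (de (x * c) <= de (y * c)) by (apply (de_le _ _ _ HE); nra).
  assert (be * c * de (x * c) <= be * c * de (y * c)) by (apply Rmult_le_compat_l; nra).
  assert (Rmin (be * c * de (x * c)) (p * c + r * l) <= Rmin (be * c * de (y * c)) (p * c + r * l))
    by (unfold Rmin; repeat destruct Rle_dec; lra).
  assert (th * du y < th * du x) by (apply Rmult_lt_compat_l; lra). lra.
Qed.

Lemma ht_rc u du iu e de ie c p d r th be l0 :
  phyp c p d r th be -> u_hyp u du iu -> e_hyp e de ie -> 0 <= l0 ->
  rc (fun l => htilde d r (fst (W du iu de ie c p d r th be l)) (snd (W du iu de ie c p d r th be l))) l0.
Proof.
  intros HP HU HE Hl0. pose proof HP as (Hd&Hr&Hc&Hp&Hth&Hb).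
  set (xf := fun l => fst (W du iu de ie c p d r th be l)).
  set (af := fun l => a_val ie c p r be l).
  apply (rc_ext0 (fun l => d * xf l + r * Rmax 0 (xf l - af l))); auto.
  { intros l Hl. unfold htilde. f_equal. f_equal.
    destruct (W_spec u du iu e de ie c p d r th be l HP HU HE Hl) as (_&_&B&_). rewrite B. reflexivity. }
  apply rc_comb.
  - apply (rc_root (psi du de c p d r th be) xf 0 1 l0); auto.
    + intros l Hl. destruct (W_spec u du iu e de ie c p d r th be l HP HU HE Hl) as (A&_). unfold xf. lra.
    + intros l x Hl Hx Hxr. destruct (W_spec u du iu e de ie c p d r th be l HP HU HE Hl) as (A&_&_&B&_).
      fold (xf l) in A, B. pose proof (psi_dec u du iu e de ie c p d r th be l x (xf l) HP HU HE Hx Hxr).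
      destruct B as [B|[B1 B2]]; [lra|]. rewrite B1 in H. lra.
    + intros l x Hl Hx Hx1. destruct (W_spec u du iu e de ie c p d r th be l HP HU HE Hl) as (A&_&_&B&_).
      fold (xf l) in A, B. destruct B as [B|[B1 B2]]; [|lra].
      pose proof (psi_dec u du iu e de ie c p d r th be l (xf l) x HP HU HE (proj1 A) Hx). lra.
    + intros x _. apply psi_rc; auto.
  - apply (rc_root_unb (fun l a => (p * c + r * l) - be * c * de (a * c)) af 0 l0); auto.
    + intros l Hl. destruct (a_facts e de ie c p r be l HE Hr Hc Hp Hb Hl). unfold af. lra.
    + intros l x Hl Hx Hxa. destruct (a_facts e de ie c p r be l HE Hr Hc Hp Hb Hl) as [_ Ha].
      fold (af l) in Ha.
      assert (de (x * c) < de (af l * c)) by (apply (de_lt _ _ _ HE); nra).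
      assert (be * c * de (x * c) < be * c * de (af l * c)) by (apply Rmult_lt_compat_l; nra). lra.
    + intros l x Hl Hxa. destruct (a_facts e de ie c p r be l HE Hr Hc Hp Hb Hl) as [Ha0 Ha].
      fold (af l) in Ha, Ha0.
      assert (de (af l * c) < de (x * c)) by (apply (de_lt _ _ _ HE); nra).
      assert (be * c * de (af l * c) < be * c * de (x * c)) by (apply Rmult_lt_compat_l; nra). lra.
    + intros x _. apply (rc_lip _ _ r); auto. intros l Hl.
      replace (p * c + r * l - be * c * de (x * c) - (p * c + r * l0 - be * c * de (x * c)))
        with (r * (l - l0)) by ring. rewrite Rabs_mult, (Rabs_pos_eq r) by lra. lra.
Qed.

Theorem theorem1 (T : nat) (Q pi : R) (d r c p th be : nat -> R)
    (u e du iu de ie : nat -> R -> R) :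
  (1 <= T)%nat -> 0 < Q -> 0 < pi ->
  (forall t, (1 <= t <= T)%nat ->
     0 <= d t /\ 0 <= r t /\ 0 < c t /\ 0 < p t /\ 0 < th t /\ 0 < be t) ->
  (forall t, (1 <= t <= T)%nat -> u_hyp (u t) (du t) (iu t)) ->
  (forall t, (1 <= t <= T)%nat -> e_hyp (e t) (de t) (ie t)) ->
  let lam := lam_star T Q pi d r c p th be du iu de ie in
  let xs := fun t => fst (W (du t) (iu t) (de t) (ie t) (c t) (p t) (d t) (r t)
                            (th t) (be t) lam) in
  let zs := fun t => snd (W (du t) (iu t) (de t) (ie t) (c t) (p t) (d t) (r t)
                            (th t) (be t) lam) in
  let s := Rmax 0 (sum_n_m (fun t => htilde (d t) (r t) (xs t) (zs t)) 1 T - Q) in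
  KKT_point T Q pi d r c p th be du de xs zs s lam.
Proof.
  intros HT HQ Hpi Hpar HU HE lam xs zs s.
  set (Af := A_usage T d r c p th be du iu de ie).
  assert (Hrc : forall l, 0 <= l -> rc Af l).
  { intros l Hl. unfold Af, A_usage.
    apply (rc_sum (fun t l => htilde (d t) (r t)
       (fst (W (du t) (iu t) (de t) (ie t) (c t) (p t) (d t) (r t) (th t) (be t) l))
       (snd (W (du t) (iu t) (de t) (ie t) (c t) (p t) (d t) (r t) (th t) (be t) l))) l T).
    intros t Ht. apply (ht_rc (u t) (du t) (iu t) (e t) (de t) (ie t)); [exact (Hpar t Ht) | apply HU; auto | apply HE; auto | auto]. }
  assert (G : 0 <= lam <= pi /\ (lam < pi -> Af lam <= Q) /\ (0 < lam -> Q <= Af lam))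
    by exact (global_lam Af Q pi Hpi Hrc).
  assert (ES : sum_n_m (fun t => htilde (d t) (r t) (xs t) (zs t)) 1 T = Af lam) by reflexivity.
  unfold s, KKT_point. rewrite !ES. clear ES s.
  destruct G as [[Gl0 Glp] [G1 G2]].
  assert (Hw : forall t, (1 <= t <= T)%nat ->
    Wgood (du t) (de t) (ie t) (c t) (p t) (d t) (r t) (th t) (be t) lam (xs t) (zs t)).
  { intros t Ht. apply (W_spec (u t) (du t) (iu t) (e t) (de t) (ie t)); [exact (Hpar t Ht) | apply HU; auto | apply HE; auto | auto]. }
  assert (Hm : forall t, exists m : R * R * R, (1 <= t <= T)%nat ->
     let al := fst (fst m) in let ga := snd (fst m) in let dl := snd m in
     0 <= al /\ 0 <= ga /\ 0 <= dl /\
     th t * du t (xs t) - be t * c t * de t ((xs t - zs t) * c t) + ga - dl - lam * d t = 0 /\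
     be t * c t * de t ((xs t - zs t) * c t) - p t * c t + al - ga - lam * r t = 0 /\
     al * zs t = 0 /\ ga * (xs t - zs t) = 0 /\ dl * (1 - xs t) = 0).
  { intros t. destruct (le_lt_dec 1 t) as [h1|h1]; [destruct (le_lt_dec t T) as [h2|h2]|].
    - destruct (Hw t (conj h1 h2)) as (_&_&_&_&al&ga&dl&M). exists (al, ga, dl). intros _. exact M.
    - exists (0, 0, 0). intros; lia.
    - exists (0, 0, 0). intros; lia. }
  set (mf := fun t => proj1_sig (constructive_indefinite_description _ (Hm t))).
  assert (Hmf : forall t, (1 <= t <= T)%nat -> _) by
    (intros t Ht; exact (proj2_sig (constructive_indefinite_description _ (Hm t)) Ht)).
  split.
  { intros t Ht. destruct (Hw t Ht) as (A&B&_). lra. }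
  split; [apply Rmax_l|]. split; [apply Rmax_r|].
  split. { intros t Ht. destruct (Hw t Ht) as (A&_). lra. }
  split; [lra|].
  exists (fun t => fst (fst (mf t))), (fun t => snd (fst (mf t))), (fun t => snd (mf t)), (pi - lam).
  split. { intros t Ht. destruct (Hmf t Ht) as (A&B&C&_). auto. }
  split; [lra|].
  split. { intros t Ht. destruct (Hmf t Ht) as (_&_&_&A&_). exact A. }
  split. { intros t Ht. destruct (Hmf t Ht) as (_&_&_&_&A&_). exact A. }
  split; [ring|].
  split. { intros t Ht. destruct (Hmf t Ht) as (_&_&_&_&_&A). exact A. }
  split.
  - destruct (Rlt_dec lam pi) as [h|h].
    + rewrite Rmax_left by (specialize (G1 h); lra). ring.
    + replace (pi - lam) with 0 by lra. ring.
  - destruct (Rlt_dec 0 lam) as [h|h].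
    + rewrite Rmax_right by (specialize (G2 h); lra). ring.
    + replace lam with 0 by lra. ring.
Qed.
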